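(* For every integer $n\geq 2$, the sequence $a_k=k^n/k!$, $k=1,2,\ldots$, is unimodal and has a unique maximizer, which is either $k=\lfloor e^{w(n)}\rfloor$ or $k=\lfloor e^{w(n)}\rfloor+1$.
   Context: $w(n)$ denotes Lambert's W function, i.e. the unique real $w>0$ with $n=we^{w}$. $\lfloor x\rfloor$ is the integer part of $x$. A sequence is unimodal if it is weakly increasing up to some index and weakly decreasing afterwards. *)

(* Defs.v *)
From Stdlib Require Import Reals Lra Lia ZArith.
Open Scope R_scope.

Definition is_lambertW (n w : R) : Prop := 0 < w /\ n = w * exp w.

Definition seq_a (n k : nat) : R := INR (k ^ n) / INR (fact k).

Definition unimodal_from1 (a : nat -> R) : Prop :=
  exists m : nat, (1 <= m)%nat /\
    (forall k : nat, (1 <= k)%nat -> (k < m)%nat -> a k <= a (S k)) /\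
    (forall k : nat, (m <= k)%nat -> a (S k) <= a k).

Definition unique_maximizer_from1 (a : nat -> R) (k : nat) : Prop :=
  (1 <= k)%nat /\ forall j : nat, (1 <= j)%nat -> j <> k -> a j < a k.

(* Integer part (floor): Stdlib's Int_part x = up x - 1 = floor x. *)
Definition floorZ (x : R) : Z := Int_part x.

(* Main.v *)
Require Import Defs.
From Stdlib Require Import Reals ZArith.
From Stdlib Require Import Lra Lia.
Open Scope R_scope.

Lemma ln_le' : forall a b, 0 < a -> a <= b -> ln a <= ln b.
Proof. intros a b Ha Hb. destruct (Req_dec a b) as [->|H]; [lra|].
  left; apply ln_increasing; lra. Qed.

Lemma ln_le_inv' : forall a b, 0 < a -> 0 < b -> ln a <= ln b -> a <= b.
Proof. intros a b Ha Hb H. destruct (Rle_lt_dec a b) as [|H']; auto.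
  assert (ln b < ln a) by (apply ln_increasing; lra). lra. Qed.

Lemma pow_S_mod (k m : nat) : exists q, (S k ^ m = k * q + 1)%nat.
Proof. induction m as [|m [q Hq]]. - exists 0%nat. simpl. lia.
  - exists (q * S k + 1)%nat. rewrite Nat.pow_succ_r'. rewrite Hq. nia. Qed.

Lemma F3 (k m : nat) : (1 <= k)%nat -> (1 <= m)%nat -> (S k ^ m <> k ^ S m)%nat.
Proof. intros Hk Hm E. destruct (pow_S_mod k m) as [q Hq].
  rewrite Hq, Nat.pow_succ_r' in E.
  destruct (Nat.eq_dec k 1) as [->|Hk2].
  - rewrite Nat.pow_1_l in E. simpl in Hq.
    assert (2 ^ 1 <= 2 ^ m)%nat by (apply Nat.pow_le_mono_r; lia). simpl in H. lia.
  - destruct (le_lt_dec (k ^ m) q); nia. Qed.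

Lemma seq_a_S (n k : nat) : (1 <= n)%nat ->
  seq_a n (S k) = INR (S k ^ (n - 1)) / INR (fact k).
Proof. intros Hn. unfold seq_a. destruct n as [|m]; [lia|].
  replace (S m - 1)%nat with m by lia.
  rewrite Nat.pow_succ_r'. change (fact (S k)) with (S k * fact k)%nat.
  rewrite !mult_INR. field. split; [apply INR_fact_neq_0|apply not_0_INR; lia]. Qed.

Lemma cmp_lt (n k : nat) : (1 <= n)%nat -> (S k ^ (n-1) < k ^ n)%nat ->
  seq_a n (S k) < seq_a n k.
Proof. intros Hn H. rewrite seq_a_S by auto. unfold seq_a.
  unfold Rdiv. apply Rmult_lt_compat_r.
  - apply Rinv_0_lt_compat, INR_fact_lt_0.
  - apply lt_INR; auto. Qed.

Lemma cmp_gt (n k : nat) : (1 <= n)%nat -> (k ^ n < S k ^ (n-1))%nat ->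
  seq_a n k < seq_a n (S k).
Proof. intros Hn H. rewrite seq_a_S by auto. unfold seq_a.
  unfold Rdiv. apply Rmult_lt_compat_r.
  - apply Rinv_0_lt_compat, INR_fact_lt_0.
  - apply lt_INR; auto. Qed.

Lemma F1 (n k : nat) (w : R) : (1 <= n)%nat -> (1 <= k)%nat -> 0 < w ->
  INR n = w * exp w -> INR k + 1 <= exp w -> (k ^ n <= S k ^ (n-1))%nat.
Proof.
  intros Hn Hk Hw Hnw Hkx.
  assert (Hk0 : 0 < INR k) by (apply lt_0_INR; lia).
  set (x := exp w) in *.
  assert (Hx : 0 < x) by apply exp_pos.
  set (lk := ln (INR k)). set (lk1 := ln (INR k + 1)).
  set (t := lk1 - lk).
  assert (E : exp (-t) * (INR k + 1) = INR k).
  { rewrite <- (exp_ln (INR k + 1)) at 1 by lra. rewrite <- exp_plus.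
    replace (-t + ln (INR k + 1)) with lk by (unfold t, lk1; ring).
    apply exp_ln; auto. }
  pose proof (exp_ineq1_le (-t)) as Hle.
  assert (Ht : t * (INR k + 1) >= 1) by nra.
  assert (Ht0 : t >= 0) by nra.
  assert (Hxt : x * t >= 1).
  { assert ((x - (INR k+1))*t >= 0) by (apply Rle_ge, Rmult_le_pos; lra). nra. }
  assert (Hnt : INR n * t >= w).
  { rewrite Hnw. assert (w * (x*t - 1) >= 0) by (apply Rle_ge, Rmult_le_pos; lra). nra. }
  assert (Hw1 : lk1 <= w).
  { unfold lk1. rewrite <- (ln_exp w). apply ln_le'; unfold x in *; lra. }
  assert (Hn1 : INR n = INR (n - 1) + 1).
  { rewrite <- S_INR. f_equal. lia. }
  apply INR_le. rewrite !pow_INR. apply ln_le_inv'.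
  - apply pow_lt; auto.
  - apply pow_lt. rewrite S_INR. lra.
  - rewrite !ln_pow by (try rewrite S_INR; lra). rewrite S_INR.
    fold lk lk1. unfold t in Hnt. rewrite Hn1 in Hnt |- *. nra.
Qed.

Lemma F2 (n k : nat) (w : R) : (1 <= n)%nat -> 0 < w ->
  INR n = w * exp w -> exp w <= INR k -> (S k ^ (n-1) <= k ^ n)%nat.
Proof.
  intros Hn Hw Hnw Hkx.
  set (x := exp w) in *.
  assert (Hx1 : 1 < x) by (unfold x; pose proof (exp_ineq1 w); lra).
  assert (Hk0 : 0 < INR k) by lra.
  set (lk := ln (INR k)). set (lk1 := ln (INR k + 1)).
  set (t := lk1 - lk).
  assert (E : exp t * INR k = INR k + 1).
  { rewrite <- (exp_ln (INR k)) at 1 by lra. rewrite <- exp_plus.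
    replace (t + ln (INR k)) with lk1 by (unfold t, lk; ring).
    apply exp_ln; lra. }
  pose proof (exp_ineq1_le t) as Hle.
  assert (Ht : t * INR k <= 1) by nra.
  assert (Ht0 : t >= 0).
  { unfold t, lk1, lk. assert (ln (INR k) <= ln (INR k + 1)) by (apply ln_le'; lra). lra. }
  assert (Hxt : x * t <= 1).
  { assert ((INR k - x)*t >= 0) by (apply Rle_ge, Rmult_le_pos; lra). nra. }
  assert (Hnt : INR n * t <= w).
  { rewrite Hnw. assert (w * (1 - x*t) >= 0) by (apply Rle_ge, Rmult_le_pos; lra). nra. }
  assert (Hw1 : w <= lk1).
  { unfold lk1. rewrite <- (ln_exp w). apply ln_le'; unfold x in *; lra. }
  assert (Hn1 : INR n = INR (n - 1) + 1).
  { rewrite <- S_INR. f_equal. lia. }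
  apply INR_le. rewrite !pow_INR. apply ln_le_inv'.
  - apply pow_lt. rewrite S_INR. lra.
  - apply pow_lt; auto.
  - rewrite !ln_pow by (try rewrite S_INR; lra). rewrite S_INR.
    fold lk lk1. unfold t in Hnt. rewrite Hn1 in Hnt |- *. nra.
Qed.

Lemma generic (a : nat -> R) (M : nat) : (1 <= M)%nat ->
  (forall k, (1 <= k)%nat -> (k < M)%nat -> a k < a (S k)) ->
  (forall k, (M <= k)%nat -> a (S k) < a k) ->
  unimodal_from1 a /\ unique_maximizer_from1 a M.
Proof.
  intros HM Hinc Hdec. split.
  - exists M. split; [auto|split].
    + intros k H1 H2. left. auto.
    + intros k H1. left. auto.
  - split; auto. intros j Hj Hne.
    destruct (le_lt_dec M j) as [Hle|Hlt].
    + assert (forall d, a (M + S d)%nat < a M).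
      { induction d.
        - replace (M + 1)%nat with (S M) by lia. apply Hdec. lia.
        - replace (M + S (S d))%nat with (S (M + S d)) by lia.
          eapply Rlt_trans; [apply Hdec; lia| auto]. }
      replace j with (M + S (j - M - 1))%nat by lia. auto.
    + assert (forall d, (j + S d <= M)%nat -> a j < a (j + S d)%nat).
      { induction d; intros Hd.
        - replace (j + 1)%nat with (S j) by lia. apply Hinc; lia.
        - replace (j + S (S d))%nat with (S (j + S d)) by lia.
          eapply Rlt_trans; [apply IHd; lia| apply Hinc; lia]. }
      replace M with (j + S (M - j - 1))%nat by lia. apply H. lia.
Qed.

Theorem proposition2 (n : nat) (hn : (2 <= n)%nat) (w : R) (hw : is_lambertW (INR n) w) :
  unimodal_from1 (seq_a n) /\
  exists k : nat, unique_maximizer_from1 (seq_a n) k /\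
    (Z.of_nat k = floorZ (exp w) \/ Z.of_nat k = (floorZ (exp w) + 1)%Z).
Proof.
  destruct hw as [Hw Hnw].
  assert (Hx1 : 1 < exp w) by (pose proof (exp_ineq1 w); lra).
  destruct (base_Int_part (exp w)) as [B1 B2].
  set (f := Int_part (exp w)) in *.
  assert (Hf : (1 <= f)%Z).
  { assert (0 < IZR f) by lra. apply lt_IZR in H. lia. }
  set (K := Z.to_nat f).
  assert (HK : Z.of_nat K = f) by (unfold K; lia).
  assert (HKR : INR K = IZR f) by (rewrite INR_IZR_INZ, HK; auto).
  assert (HK1 : (1 <= K)%nat) by lia.
  assert (Hn1 : (1 <= n)%nat) by lia.
  assert (Hinc : forall k, (1 <= k)%nat -> (k < K)%nat -> seq_a n k < seq_a n (S k)).
  { intros k H1 H2. apply cmp_gt; auto.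
    pose proof (F1 n k w Hn1 H1 Hw Hnw).
    assert (INR k + 1 <= exp w).
    { rewrite <- S_INR. apply le_INR in H2. lra. }
    specialize (H H0).
    pose proof (F3 k (n-1) H1 ltac:(lia)). replace (S (n-1)) with n in H3 by lia. lia. }
  assert (Hdec : forall k, (S K <= k)%nat -> seq_a n (S k) < seq_a n k).
  { intros k H1. apply cmp_lt; auto.
    assert (exp w <= INR k).
    { apply le_INR in H1. rewrite S_INR in H1. lra. }
    pose proof (F2 n k w Hn1 Hw Hnw H).
    pose proof (F3 k (n-1) ltac:(lia) ltac:(lia)). replace (S (n-1)) with n in H2 by lia. lia. }
  pose proof (F3 K (n-1) HK1 ltac:(lia)) as HneK. replace (S (n-1)) with n in HneK by lia.
  destruct (le_lt_dec (S K ^ (n-1)) (K ^ n)) as [Hc|Hc].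
  - assert (HKd : seq_a n (S K) < seq_a n K) by (apply cmp_lt; auto; lia).
    destruct (generic (seq_a n) K HK1 Hinc) as [U M].
    { intros k Hk. destruct (Nat.eq_dec k K) as [->|]; auto. apply Hdec; lia. }
    split; auto. exists K. split; auto.
  - assert (HKd : seq_a n K < seq_a n (S K)) by (apply cmp_gt; auto).
    destruct (generic (seq_a n) (S K) ltac:(lia)) as [U M].
    { intros k Hk1 Hk2. destruct (Nat.eq_dec k K) as [->|]; auto. apply Hinc; lia. }
    { auto. }
    split; auto. exists (S K). split; auto. right. unfold floorZ. fold f. lia.
Qed.
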